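(* Let $F(z)=\sum_{k=0}^\infty b_k z^k\in\mathcal{B}$ with $b_1=a\in(0,1)$, and let $0<r\le 1/\sqrt3$. Then for every integer $n\ge 2$, \[ \sum_{k=2}^n k|b_k|^2r^{2k}\le \frac{3(9-4a^2)^2}{64a^4}\sum_{k=2}^n\frac1k\left(\frac43a^2r^2\right)^k. \]
   Context: $\mathbb{D}$ denotes the open unit disc. $\mathcal{B}$ is the class of functions $F$ analytic in $\mathbb{D}$ satisfying $|F'(z)|\le \frac{1}{1-|z|^2}$ for all $z\in\mathbb{D}$. For $F\in\mathcal{B}$ we write its Taylor expansion as $F(z)=\sum_{k=0}^\infty b_k z^k$. *)

(* Defs.v *)
From Stdlib Require Import Reals.
Open Scope R_scope.

Definition Cplx := (R * R)%type.
Definition Cadd (z w : Cplx) : Cplx := (fst z + fst w, snd z + snd w).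
Definition Cmul (z w : Cplx) : Cplx :=
  (fst z * fst w - snd z * snd w, fst z * snd w + snd z * fst w).
Definition Cscale (t : R) (z : Cplx) : Cplx := (t * fst z, t * snd z).
Fixpoint Cpow (z : Cplx) (n : nat) : Cplx :=
  match n with O => (1, 0) | S m => Cmul z (Cpow z m) end.
Definition Cmod (z : Cplx) : R := sqrt (fst z ^ 2 + snd z ^ 2).

Definition Cseries (f : nat -> Cplx) (s : Cplx) : Prop :=
  Un_cv (fun N => sum_f_R0 (fun k => fst (f k)) N) (fst s) /\
  Un_cv (fun N => sum_f_R0 (fun k => snd (f k)) N) (snd s).

(* F(z) = sum_k b_k z^k is analytic in the unit disc D (its Taylor series at 0
   converges on all of D), and F'(z) = sum_k (k+1) b_(k+1) z^k satisfies
   |F'(z)| <= 1/(1-|z|^2) for all z in D. *)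
Definition in_class_B (b : nat -> Cplx) : Prop :=
  forall z : Cplx, Cmod z < 1 ->
    (exists s, Cseries (fun k => Cmul (b k) (Cpow z k)) s) /\
    (exists w, Cseries (fun k => Cscale (INR (S k)) (Cmul (b (S k)) (Cpow z k))) w
               /\ Cmod w <= 1 / (1 - Cmod z ^ 2)).

(* Main.v *)
Require Import Defs.
From Stdlib Require Import Reals Lra Lia Psatz.
Open Scope R_scope.


Definition Cnorm2 (z : Cplx) : R := fst z ^ 2 + snd z ^ 2.
Definition Csub (z w : Cplx) : Cplx := (fst z - fst w, snd z - snd w).
Definition Csum (f : nat -> Cplx) (n : nat) : Cplx :=
  (sum_f_R0 (fun k => fst (f k)) n, sum_f_R0 (fun k => snd (f k)) n).
Definition peval (a : nat -> Cplx) (n : nat) (z : Cplx) : Cplx :=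
  Csum (fun j => Cmul (a j) (Cpow z j)) n.
Definition upt (rho phi : R) : Cplx := (rho * cos phi, rho * sin phi).

Lemma Cnorm2_ge0 z : 0 <= Cnorm2 z.
Proof. unfold Cnorm2; nra. Qed.

Lemma Cmod_ge0 z : 0 <= Cmod z.
Proof. apply sqrt_pos. Qed.

Lemma Cmod_sq z : Cmod z ^ 2 = Cnorm2 z.
Proof. unfold Cmod. rewrite pow2_sqrt; [reflexivity| apply Cnorm2_ge0]. Qed.

Lemma Cnorm2_mul z w : Cnorm2 (Cmul z w) = Cnorm2 z * Cnorm2 w.
Proof. destruct z, w; unfold Cnorm2, Cmul; simpl; ring. Qed.

Lemma Cmod_mul z w : Cmod (Cmul z w) = Cmod z * Cmod w.
Proof.
  unfold Cmod. fold (Cnorm2 (Cmul z w)). fold (Cnorm2 z). fold (Cnorm2 w).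
  rewrite Cnorm2_mul. apply sqrt_mult; apply Cnorm2_ge0.
Qed.

Lemma Cmod_pow z k : Cmod (Cpow z k) = Cmod z ^ k.
Proof.
  induction k; simpl.
  - unfold Cmod; simpl. replace (1 * (1 * 1) + 0 * (0 * 1)) with 1 by ring. apply sqrt_1.
  - rewrite Cmod_mul, IHk. ring.
Qed.

Lemma sq_le_sq_le x y : 0 <= y -> x ^ 2 <= y ^ 2 -> x <= y.
Proof. intros. nra. Qed.

Lemma Rabs_le_sq x y : 0 <= y -> x ^ 2 <= y ^ 2 -> Rabs x <= y.
Proof. intros. apply sq_le_sq_le; auto. rewrite pow2_abs. auto. Qed.

Lemma Cmod_fst z : Rabs (fst z) <= Cmod z.
Proof. apply Rabs_le_sq. apply Cmod_ge0. rewrite Cmod_sq. unfold Cnorm2. nra. Qed.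
Lemma Cmod_snd z : Rabs (snd z) <= Cmod z.
Proof. apply Rabs_le_sq. apply Cmod_ge0. rewrite Cmod_sq. unfold Cnorm2. nra. Qed.

Lemma Cmod_l1 z : Cmod z <= Rabs (fst z) + Rabs (snd z).
Proof.
  apply sq_le_sq_le. pose proof (Rabs_pos (fst z)); pose proof (Rabs_pos (snd z)); lra.
  rewrite Cmod_sq. unfold Cnorm2.
  pose proof (Rabs_pos (fst z)); pose proof (Rabs_pos (snd z)).
  rewrite <- (pow2_abs (fst z)), <- (pow2_abs (snd z)). nra.
Qed.

Lemma Cmod_triang z w : Cmod (Cadd z w) <= Cmod z + Cmod w.
Proof.
  apply sq_le_sq_le. pose proof (Cmod_ge0 z); pose proof (Cmod_ge0 w); lra.
  assert (H: fst z * fst w + snd z * snd w <= Cmod z * Cmod w).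
  { apply sq_le_sq_le. pose proof (Cmod_ge0 z); pose proof (Cmod_ge0 w); nra.
    rewrite Rpow_mult_distr, !Cmod_sq. unfold Cnorm2.
    pose proof (pow2_ge_0 (fst z * snd w - snd z * fst w)). nra. }
  replace ((Cmod z + Cmod w)^2) with (Cmod z ^2 + Cmod w ^2 + 2 * (Cmod z * Cmod w)) by ring.
  rewrite !Cmod_sq. unfold Cnorm2, Cadd; simpl. nra.
Qed.

Lemma Cnorm2_scale c z : Cnorm2 (Cscale c z) = c ^ 2 * Cnorm2 z.
Proof. destruct z; unfold Cnorm2, Cscale; simpl; ring. Qed.

Lemma Cmod_scale c z : Cmod (Cscale c z) = Rabs c * Cmod z.
Proof.
  unfold Cmod. fold (Cnorm2 (Cscale c z)). fold (Cnorm2 z).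
  rewrite Cnorm2_scale, sqrt_mult; [| apply pow2_ge_0 | apply Cnorm2_ge0].
  f_equal. rewrite <- sqrt_Rsqr_abs. unfold Rsqr. f_equal. ring.
Qed.


Lemma Cpow_upt rho phi j :
  Cpow (upt rho phi) j = (rho ^ j * cos (INR j * phi), rho ^ j * sin (INR j * phi)).
Proof.
  induction j.
  - simpl. rewrite Rmult_0_l, cos_0, sin_0. f_equal; ring.
  - simpl Cpow. rewrite IHj. unfold Cmul, upt; simpl fst; simpl snd.
    rewrite S_INR. replace ((INR j + 1) * phi) with (phi + INR j * phi) by ring.
    rewrite cos_plus, sin_plus. f_equal; simpl; ring.
Qed.

Lemma sum_mul_l (f : nat -> R) c n : c * sum_f_R0 f n = sum_f_R0 (fun i => c * f i) n.
Proof. rewrite (scal_sum f n c). apply sum_eq. intros; ring. Qed.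

Lemma sum_sq (f : nat -> R) n :
  (sum_f_R0 f n) ^ 2 = sum_f_R0 (fun j => sum_f_R0 (fun l => f j * f l) n) n.
Proof.
  replace ((sum_f_R0 f n)^2) with (sum_f_R0 f n * sum_f_R0 f n) by ring.
  rewrite (scal_sum f n (sum_f_R0 f n)). apply sum_eq. intros.
  apply sum_mul_l.
Qed.

Lemma sum_swap (F : nat -> nat -> R) K n :
  sum_f_R0 (fun k => sum_f_R0 (fun j => F k j) n) K =
  sum_f_R0 (fun j => sum_f_R0 (fun k => F k j) K) n.
Proof.
  induction K.
  - simpl. reflexivity.
  - simpl sum_f_R0 at 1. rewrite IHK. rewrite <- sum_plus. apply sum_eq. intros. simpl. reflexivity.
Qed.

Lemma sum_delta (f : nat -> R) c j n : (j <= n)%nat ->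
  sum_f_R0 (fun l => f l * (if Nat.eqb j l then c else 0)) n = f j * c.
Proof.
  induction n; intros Hj.
  - assert (j = 0%nat) by lia. subst. simpl. reflexivity.
  - destruct (Nat.eq_dec j (S n)) as [->|Hne].
    + change (sum_f_R0 ?F (S n)) with (sum_f_R0 F n + F (S n)); cbv beta. rewrite Nat.eqb_refl.
      rewrite sum_eq_R0. ring. intros l Hl. cbv beta.
      destruct (Nat.eqb (S n) l) eqn:E. apply Nat.eqb_eq in E. lia. ring.
    + change (sum_f_R0 ?F (S n)) with (sum_f_R0 F n + F (S n)); cbv beta. rewrite IHn by lia.
      destruct (Nat.eqb j (S n)) eqn:E. apply Nat.eqb_eq in E. lia. ring.
Qed.

Lemma telescope (f : nat -> R) K :
  sum_f_R0 (fun k => f (S k) - f k) K = f (S K) - f 0%nat.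
Proof. induction K; simpl. ring. rewrite IHK. ring. Qed.

Lemma telescope2 (f : nat -> R) K :
  sum_f_R0 (fun k => f k - f (S k)) K = f 0%nat - f (S K).
Proof. induction K; simpl. ring. rewrite IHK. ring. Qed.

Lemma trig_sum_pos (d M : nat) : (0 < d < M)%nat ->
  sum_f_R0 (fun k => cos (INR k * (INR d * (2 * PI / INR M)))) (pred M) = 0 /\
  sum_f_R0 (fun k => sin (INR k * (INR d * (2 * PI / INR M)))) (pred M) = 0.
Proof.
  intros [Hd HM].
  assert (HMpos : 0 < INR M) by (apply lt_0_INR; lia).
  assert (Hdpos : 0 < INR d) by (apply lt_0_INR; lia).
  assert (HdM : INR d < INR M) by (apply lt_INR; lia).
  set (x := INR d * (2 * PI / INR M)).
  set (h := x / 2).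
  assert (Hh : h = INR d * PI / INR M) by (unfold h, x; field; lra).
  assert (Hsh : 0 < sin h).
  { apply sin_gt_0; rewrite Hh. apply Rdiv_lt_0_compat; [|lra]. pose proof PI_RGT_0; nra.
    apply (Rmult_lt_reg_r (INR M)); auto. unfold Rdiv. rewrite Rmult_assoc, Rinv_l by lra.
    pose proof PI_RGT_0. nra. }
  assert (HSM : S (pred M) = M) by lia.
  assert (Hend : INR M * x - h = - h + 2 * INR d * PI).
  { unfold h, x. field. lra. }
  split.
  - assert (E: 2 * sin h * sum_f_R0 (fun k => cos (INR k * x)) (pred M) =
            sum_f_R0 (fun k => (fun k => sin (INR k * x - h)) (S k) - (fun k => sin (INR k * x - h)) k) (pred M)).
    { rewrite sum_mul_l. apply sum_eq. intros i _. cbv beta.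
      rewrite S_INR. replace ((INR i + 1) * x - h) with (INR i * x + h) by (unfold h; field).
      rewrite sin_plus, sin_minus. ring. }
    rewrite telescope in E. cbv beta in E. change (INR 0) with 0 in E. rewrite HSM, Hend, sin_period in E.
    replace (0 * x - h) with (-h) in E by ring.
    assert (sum_f_R0 (fun k : nat => cos (INR k * x)) (pred M) * (2 * sin h) = 0) by lra.
    apply Rmult_integral in H. destruct H; auto. lra.
  - assert (E: 2 * sin h * sum_f_R0 (fun k => sin (INR k * x)) (pred M) =
            sum_f_R0 (fun k => (fun k => cos (INR k * x - h)) k - (fun k => cos (INR k * x - h)) (S k)) (pred M)).
    { rewrite sum_mul_l.
      apply sum_eq. intros i _. cbv beta.
      rewrite S_INR. replace ((INR i + 1) * x - h) with (INR i * x + h) by (unfold h; field).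
      rewrite cos_plus, cos_minus. ring. }
    rewrite telescope2 in E. cbv beta in E. change (INR 0) with 0 in E. rewrite HSM, Hend, cos_period in E.
    replace (0 * x - h) with (-h) in E by ring.
    assert (sum_f_R0 (fun k : nat => sin (INR k * x)) (pred M) * (2 * sin h) = 0) by lra.
    apply Rmult_integral in H. destruct H; auto. lra.
Qed.

Lemma trig_sum (j l M : nat) : (j < M)%nat -> (l < M)%nat ->
  sum_f_R0 (fun k => cos (INR k * ((INR j - INR l) * (2 * PI / INR M)))) (pred M) =
    (if Nat.eqb j l then INR M else 0) /\
  sum_f_R0 (fun k => sin (INR k * ((INR j - INR l) * (2 * PI / INR M)))) (pred M) = 0.
Proof.
  intros Hj Hl.
  destruct (Nat.lt_total j l) as [Hlt|[Heq|Hgt]].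
  - destruct (trig_sum_pos (l - j) M) as [C S]; [lia|].
    assert (Ed : INR j - INR l = - INR (l - j)) by (rewrite minus_INR by lia; ring).
    destruct (Nat.eqb j l) eqn:E. apply Nat.eqb_eq in E; lia.
    split.
    + rewrite <- C. apply sum_eq; intros. rewrite Ed.
      replace (INR i * (- INR (l - j) * (2 * PI / INR M))) with (- (INR i * (INR (l - j) * (2 * PI / INR M)))) by ring.
      apply cos_neg.
    + transitivity (-1 * sum_f_R0 (fun k : nat => sin (INR k * (INR (l - j) * (2 * PI / INR M)))) (pred M));
      [| rewrite S; ring].
      rewrite sum_mul_l. apply sum_eq; intros. rewrite Ed.
      replace (INR i * (- INR (l - j) * (2 * PI / INR M))) with (- (INR i * (INR (l - j) * (2 * PI / INR M)))) by ring.
      rewrite sin_neg. ring.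
  - subst. rewrite Nat.eqb_refl. split.
    + rewrite (sum_eq _ (fun _ => 1)). rewrite sum_cte. f_equal. ring_simplify. f_equal. lia.
      intros. replace (INR i * ((INR l - INR l) * (2 * PI / INR M))) with 0 by ring. apply cos_0.
    + apply sum_eq_R0. intros. replace (INR n * ((INR l - INR l) * (2 * PI / INR M))) with 0 by ring. apply sin_0.
  - destruct (trig_sum_pos (j - l) M) as [C S]; [lia|].
    assert (Ed : INR j - INR l = INR (j - l)) by (rewrite minus_INR by lia; ring).
    destruct (Nat.eqb j l) eqn:E. apply Nat.eqb_eq in E; lia.
    split; [rewrite <- C | rewrite <- S]; apply sum_eq; intros; rewrite Ed; reflexivity.
Qed.


Lemma parseval (a : nat -> Cplx) (n M : nat) (rho : R) : (n < M)%nat ->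
  sum_f_R0 (fun k => Cnorm2 (peval a n (upt rho (INR k * (2 * PI / INR M))))) (pred M)
  = INR M * sum_f_R0 (fun j => Cnorm2 (a j) * rho ^ (2 * j)) n.
Proof.
  intros HnM.
  set (th := 2 * PI / INR M).
  set (X := fun j => fst (a j) * rho ^ j).
  set (Y := fun j => snd (a j) * rho ^ j).
  set (T := fun k j l => (X j * X l + Y j * Y l) * cos (INR k * ((INR j - INR l) * th))
                       + (X j * Y l - Y j * X l) * sin (INR k * ((INR j - INR l) * th))).
  assert (A : forall k, Cnorm2 (peval a n (upt rho (INR k * th))) =
     sum_f_R0 (fun j => sum_f_R0 (fun l => T k j l) n) n).
  { intro k. set (phi := INR k * th).
    set (U := fun j => X j * cos (INR j * phi) - Y j * sin (INR j * phi)).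
    set (V := fun j => X j * sin (INR j * phi) + Y j * cos (INR j * phi)).
    assert (E1 : fst (peval a n (upt rho phi)) = sum_f_R0 U n).
    { unfold peval, Csum; simpl fst. apply sum_eq. intros j _. rewrite Cpow_upt.
      unfold U, X, Y, Cmul; simpl. ring. }
    assert (E2 : snd (peval a n (upt rho phi)) = sum_f_R0 V n).
    { unfold peval, Csum; simpl snd. apply sum_eq. intros j _. rewrite Cpow_upt.
      unfold V, X, Y, Cmul; simpl. ring. }
    unfold Cnorm2. rewrite E1, E2, !sum_sq, <- sum_plus. apply sum_eq. intros j _.
    rewrite <- sum_plus. apply sum_eq. intros l _.
    unfold T, U, V. 
    replace (INR k * ((INR j - INR l) * th)) with (INR j * phi - INR l * phi) by (unfold phi; ring).
    rewrite cos_minus, sin_minus. ring. }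
  rewrite (sum_eq _ (fun k => sum_f_R0 (fun j => sum_f_R0 (fun l => T k j l) n) n)) by (intros; apply A).
  rewrite sum_swap.
  rewrite (sum_eq _ (fun j => (X j * X j + Y j * Y j) * INR M)).
  - rewrite sum_mul_l. apply sum_eq. intros j _. unfold X, Y, Cnorm2.
    rewrite Nat.mul_comm, pow_mult. ring.
  - intros j Hj. rewrite sum_swap.
    rewrite (sum_eq _ (fun l => (X j * X l + Y j * Y l) * (if Nat.eqb j l then INR M else 0))).
    + rewrite (sum_delta (fun l => X j * X l + Y j * Y l)) by lia. reflexivity.
    + intros l Hl. unfold T. rewrite sum_plus.
      rewrite <- !sum_mul_l.
      destruct (trig_sum j l M) as [C S]; try lia. fold th in C, S.
      rewrite C, S. ring.
Qed.


Lemma sum_mono_n (f : nat -> R) m N : (forall i, 0 <= f i) -> (m <= N)%nat ->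
  sum_f_R0 f m <= sum_f_R0 f N.
Proof.
  intros Hf HmN. replace N with (m + (N - m))%nat by lia.
  generalize (N - m)%nat. intro d. induction d.
  - rewrite Nat.add_0_r. lra.
  - replace (m + S d)%nat with (S (m + d)) by lia. simpl. specialize (Hf (S (m+d))). lra.
Qed.

Lemma gutz (G p : nat -> Cplx) (m : nat) (rho : R) : 0 < rho ->
  (forall eps, 0 < eps -> exists N0, forall N, (N0 <= N)%nat -> forall phi,
      Cnorm2 (peval G N (upt rho phi)) <= Cnorm2 (peval p m (upt rho phi)) + eps) ->
  sum_f_R0 (fun j => Cnorm2 (G j) * rho ^ (2 * j)) m <=
  sum_f_R0 (fun j => Cnorm2 (p j) * rho ^ (2 * j)) m.
Proof.
  intros Hrho H. apply Rle_plus_epsilon. intros eps Heps.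
  destruct (H eps Heps) as [N0 HN0].
  set (N := Nat.max N0 m). set (M := S N).
  assert (HM : 0 < INR M) by (apply lt_0_INR; unfold M; lia).
  pose proof (parseval G N M rho ltac:(unfold M; lia)) as PG.
  pose proof (parseval p m M rho ltac:(unfold M, N; lia)) as PP.
  assert (Hle : sum_f_R0 (fun k => Cnorm2 (peval G N (upt rho (INR k * (2 * PI / INR M))))) (pred M)
             <= sum_f_R0 (fun k => Cnorm2 (peval p m (upt rho (INR k * (2 * PI / INR M)))) + eps) (pred M)).
  { apply sum_Rle. intros. apply HN0. unfold N; lia. }
  rewrite sum_plus, sum_cte, PG, PP in Hle.
  replace (S (pred M)) with M in Hle by (unfold M; lia).
  assert (Hmono : sum_f_R0 (fun j => Cnorm2 (G j) * rho ^ (2 * j)) m <=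
                  sum_f_R0 (fun j => Cnorm2 (G j) * rho ^ (2 * j)) N).
  { apply sum_mono_n. intros. apply Rmult_le_pos. apply Cnorm2_ge0. apply pow_le; lra. unfold N; lia. }
  assert (INR M * sum_f_R0 (fun j => Cnorm2 (G j) * rho ^ (2 * j)) m <=
          INR M * (sum_f_R0 (fun j => Cnorm2 (p j) * rho ^ (2 * j)) m + eps)) by nra.
  apply Rmult_le_reg_l in H0; auto.
Qed.


Lemma Rdiv_le_0_compat x y : 0 <= x -> 0 < y -> 0 <= x / y.
Proof. intros. apply Rle_mult_inv_pos; auto. Qed.
Lemma Rdiv_lt_1 x y : 0 < y -> x < y -> x / y < 1.
Proof. intros. apply (Rmult_lt_reg_r y); auto. unfold Rdiv. rewrite Rmult_assoc, Rinv_l; lra. Qed.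

Lemma Cmod_real x : Cmod (x, 0) = Rabs x.
Proof.
  unfold Cmod; simpl fst; simpl snd. replace (x ^ 2 + 0 ^ 2) with (Rabs x ^ 2).
  apply sqrt_pow2, Rabs_pos. rewrite pow2_abs. ring.
Qed.

Lemma Cpow_real x k : Cpow (x, 0) k = (x ^ k, 0).
Proof. induction k; simpl. reflexivity. rewrite IHk. unfold Cmul; simpl. f_equal; ring. Qed.

Lemma term_le_sum (u : nat -> R) n N : (n <= N)%nat ->
  Rabs (u n) <= sum_f_R0 (fun i => Rabs (u i)) N.
Proof.
  intros H. induction N.
  - assert (n = 0%nat) by lia. subst. simpl. lra.
  - destruct (Nat.eq_dec n (S N)).
    + subst. simpl. pose proof (cond_pos_sum (fun i => Rabs (u i)) N (fun i => Rabs_pos _)). lra.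
    + simpl. pose proof (Rabs_pos (u (S N))). specialize (IHN ltac:(lia)). lra.
Qed.

Lemma cv_bounded (u : nat -> R) L : Un_cv u L -> exists B, forall n, Rabs (u n) <= B.
Proof.
  intros H. destruct (H 1 Rlt_0_1) as [N HN].
  exists (sum_f_R0 (fun i => Rabs (u i)) N + Rabs L + 1). intros n.
  pose proof (cond_pos_sum (fun i => Rabs (u i)) N (fun i => Rabs_pos _)).
  destruct (Nat.le_gt_cases n N).
  - pose proof (term_le_sum u n N H1). pose proof (Rabs_pos L). lra.
  - specialize (HN n ltac:(lia)). unfold Rdist in HN.
    pose proof (Rabs_triang (u n - L) L). replace (u n - L + L) with (u n) in H2 by ring. lra.
Qed.

Lemma terms_bounded (t : nat -> R) L : Un_cv (fun N => sum_f_R0 t N) L ->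
  exists B, forall k, Rabs (t k) <= B.
Proof.
  intros H. destruct (cv_bounded _ _ H) as [B HB]. exists (2 * B). intros k.
  pose proof (HB 0%nat). pose proof (Rabs_pos (sum_f_R0 t 0)).
  destruct k.
  - simpl in *. lra.
  - pose proof (HB (S k)). pose proof (HB k). simpl in H2.
    replace (t (S k)) with (sum_f_R0 t k + t (S k) - sum_f_R0 t k) by ring.
    pose proof (Rabs_triang (sum_f_R0 t k + t (S k)) (- sum_f_R0 t k)).
    rewrite Rabs_Ropp in H4. unfold Rminus. lra.
Qed.

Lemma lim_le (u : nat -> R) L N c e : Un_cv u L ->
  (forall K, (N <= K)%nat -> Rabs (u K - c) <= e) -> Rabs (L - c) <= e.
Proof.
  intros H HK. apply Rle_plus_epsilon. intros eps Heps.
  destruct (H eps Heps) as [N1 HN1].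
  specialize (HN1 (Nat.max N N1) ltac:(lia)). specialize (HK (Nat.max N N1) ltac:(lia)).
  unfold Rdist in HN1.
  pose proof (Rabs_triang (L - u (Nat.max N N1)) (u (Nat.max N N1) - c)).
  replace (L - u (Nat.max N N1) + (u (Nat.max N N1) - c)) with (L - c) in H0 by ring.
  rewrite <- Rabs_Ropp in HN1. replace (- (u (Nat.max N N1) - L)) with (L - u (Nat.max N N1)) in HN1 by ring.
  lra.
Qed.

Lemma tail_unif (g : nat -> Cplx) :
  (forall z, Cmod z < 1 -> exists s, Cseries (fun k => Cmul (g k) (Cpow z k)) s) ->
  forall rho, 0 <= rho < 1 -> forall eps, 0 < eps -> exists N0, forall N, (N0 <= N)%nat ->
  forall z s, Cmod z <= rho -> Cseries (fun k => Cmul (g k) (Cpow z k)) s ->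
  Cmod (Csub (peval g N z) s) <= eps.
Proof.
  intros Hg rho Hrho eps Heps.
  set (r' := (1 + rho) / 2).
  assert (Hr' : 0 < r' < 1) by (unfold r'; lra).
  destruct (Hg (r', 0)) as [s' [C1 C2]].
  { rewrite Cmod_real, Rabs_pos_eq; lra. }
  assert (E1 : forall k, fst (Cmul (g k) (Cpow (r', 0) k)) = fst (g k) * r' ^ k).
  { intro k. rewrite Cpow_real. unfold Cmul; simpl. ring. }
  assert (E2 : forall k, snd (Cmul (g k) (Cpow (r', 0) k)) = snd (g k) * r' ^ k).
  { intro k. rewrite Cpow_real. unfold Cmul; simpl. ring. }
  destruct (terms_bounded _ _ C1) as [B1 HB1].
  destruct (terms_bounded _ _ C2) as [B2 HB2].
  set (B := B1 + B2).
  assert (HB : forall k, Cmod (g k) * r' ^ k <= B).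
  { intro k. specialize (HB1 k); specialize (HB2 k). rewrite E1 in HB1. rewrite E2 in HB2.
    rewrite Rabs_mult, (Rabs_pos_eq (r' ^ k)) in HB1, HB2 by (apply pow_le; lra).
    pose proof (Cmod_l1 (g k)). pose proof (pow_le r' k ltac:(lra)). unfold B. nra. }
  assert (HB0 : 0 <= B). { specialize (HB 0%nat). pose proof (Cmod_ge0 (g 0%nat)). simpl in HB. lra. }
  set (q := rho / r').
  assert (Hq : 0 <= q < 1).
  { unfold q. split. apply Rdiv_le_0_compat; lra. apply Rdiv_lt_1; unfold r'; lra. }
  assert (Hterm : forall z k, Cmod z <= rho -> Cmod (Cmul (g k) (Cpow z k)) <= B * q ^ k).
  { intros z k Hz. rewrite Cmod_mul, Cmod_pow.
    assert (Cmod z ^ k <= rho ^ k) by (apply pow_incr; split; [apply Cmod_ge0|auto]).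
    assert (rho ^ k = r' ^ k * q ^ k) by (rewrite <- Rpow_mult_distr; f_equal; unfold q; field; lra).
    specialize (HB k). pose proof (Cmod_ge0 (g k)). pose proof (pow_le q k ltac:(lra)).
    nra. }
  set (e := fun N => B * q ^ (S N) / (1 - q)).
  assert (Hpart : forall (f : Cplx -> R), (forall w, Rabs (f w) <= Cmod w) ->
           (forall w w', f (Cadd w w') = f w + f w') ->
           forall z N d, Cmod z <= rho ->
           Rabs (sum_f_R0 (fun k => f (Cmul (g k) (Cpow z k))) (N + d) -
                 sum_f_R0 (fun k => f (Cmul (g k) (Cpow z k))) N)
           <= e N - B * q ^ (S (N + d)) / (1 - q)).
  { intros f Hf Hadd z N d Hz. induction d.
    - rewrite Nat.add_0_r. unfold e. replace (_ - _) with 0 by ring. rewrite Rabs_R0. lra.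
    - replace (N + S d)%nat with (S (N + d)) by lia.
      change (sum_f_R0 ?F (S ?n)) with (sum_f_R0 F n + F (S n)) at 1. cbv beta.
      pose proof (Hf (Cmul (g (S (N + d))) (Cpow z (S (N + d))))).
      pose proof (Hterm z (S (N+d)) Hz).
      match goal with |- Rabs (?A + ?b - ?C) <= _ =>
        pose proof (Rabs_triang (A - C) b); replace (A + b - C) with (A - C + b) by ring end.
      assert (B * q ^ S (N + d) - B * q ^ S (N + d) / (1 - q) = - (B * q ^ S (S (N + d)) / (1 - q))).
      { simpl. field. lra. }
      lra. }
  assert (Hcomp : forall (f : Cplx -> R), (forall w, Rabs (f w) <= Cmod w) ->
           (forall w w', f (Cadd w w') = f w + f w') ->
           forall z N L, Cmod z <= rho ->
           Un_cv (fun K => sum_f_R0 (fun k => f (Cmul (g k) (Cpow z k))) K) L ->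
           Rabs (L - sum_f_R0 (fun k => f (Cmul (g k) (Cpow z k))) N) <= e N).
  { intros f Hf Hadd z N L Hz Hcv. apply (lim_le _ _ N _ _ Hcv).
    intros K HK. replace K with (N + (K - N))%nat by lia.
    pose proof (Hpart f Hf Hadd z N (K - N)%nat Hz).
    assert (0 <= B * q ^ S (N + (K - N)) / (1 - q)).
    { apply Rdiv_le_0_compat; [|lra]. apply Rmult_le_pos; auto. apply pow_le; lra. }
    lra. }
  assert (Hq1 : Rabs q < 1) by (rewrite Rabs_pos_eq; lra).
  destruct (pow_lt_1_zero q Hq1 (eps * (1 - q) / (2 * (B + 1)))) as [N0 HN0].
  { apply Rdiv_lt_0_compat. nra. lra. }
  exists N0. intros N HN z s Hz [S1 S2].
  pose proof (Hcomp fst (fun w => Cmod_fst w) (fun w w' => eq_refl) z N (fst s) Hz S1) as F1.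
  pose proof (Hcomp snd (fun w => Cmod_snd w) (fun w w' => eq_refl) z N (snd s) Hz S2) as F2.
  pose proof (Cmod_l1 (Csub (peval g N z) s)).
  assert (Ef : fst (Csub (peval g N z) s) = sum_f_R0 (fun k => fst (Cmul (g k) (Cpow z k))) N - fst s) by reflexivity.
  assert (Es : snd (Csub (peval g N z) s) = sum_f_R0 (fun k => snd (Cmul (g k) (Cpow z k))) N - snd s) by reflexivity.
  rewrite Ef, Es in H.
  rewrite <- Rabs_Ropp in F1, F2.
  replace (- (fst s - sum_f_R0 (fun k : nat => fst (Cmul (g k) (Cpow z k))) N)) with
     (sum_f_R0 (fun k : nat => fst (Cmul (g k) (Cpow z k))) N - fst s) in F1 by ring.
  replace (- (snd s - sum_f_R0 (fun k : nat => snd (Cmul (g k) (Cpow z k))) N)) with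
     (sum_f_R0 (fun k : nat => snd (Cmul (g k) (Cpow z k))) N - snd s) in F2 by ring.
  specialize (HN0 N HN). rewrite Rabs_pos_eq in HN0 by (apply pow_le; lra).
  assert (e N <= B * q ^ N / (1 - q)).
  { unfold e. apply Rmult_le_compat_r. pose proof (Rinv_0_lt_compat (1 - q)); lra.
    simpl. pose proof (pow_le q N ltac:(lra)). assert (0 <= B * q ^ N) by (apply Rmult_le_pos; lra). nra. }
  assert (2 * (B * q ^ N / (1 - q)) < eps).
  { assert (B * q ^ N <= B * (eps * (1 - q) / (2 * (B + 1)))) by (apply Rmult_le_compat_l; lra).
    apply (Rmult_lt_reg_r (1 - q)). lra.
    replace (2 * (B * q ^ N / (1 - q)) * (1 - q)) with (2 * (B * q ^ N)) by (field; lra).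
    replace (B * (eps * (1 - q) / (2 * (B + 1)))) with (eps * (1 - q) * (B / (2 * (B + 1)))) in H1 by (field; lra).
    assert (B / (2 * (B + 1)) < 1/2) by (apply (Rmult_lt_reg_r (2 * (B+1))); [lra| field_simplify; lra]).
    assert (0 < eps * (1 - q)) by nra. nra. }
  lra.
Qed.


Lemma bern (x : R) n : 0 <= x <= 1 -> 1 - INR n * (1 - x) <= x ^ n.
Proof.
  intros Hx. induction n.
  - simpl. lra.
  - rewrite S_INR. simpl. pose proof (pos_INR n).
    pose proof (Rmult_le_compat_l x _ _ (proj1 Hx) IHn).
    assert (0 <= INR n * (1-x) * (1-x)) by (apply Rmult_le_pos; [apply Rmult_le_pos|]; lra).
    nra.
Qed.

Lemma Csum_ext f h n : (forall i, (i <= n)%nat -> f i = h i) -> Csum f n = Csum h n.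
Proof. intros H. unfold Csum. f_equal; apply sum_eq; intros; rewrite H; auto. Qed.

Lemma Csum_add f h n : Csum (fun i => Cadd (f i) (h i)) n = Cadd (Csum f n) (Csum h n).
Proof. unfold Csum, Cadd; simpl. f_equal; apply sum_plus. Qed.

Lemma Csum_mul_l w f n : Csum (fun i => Cmul w (f i)) n = Cmul w (Csum f n).
Proof.
  unfold Csum, Cmul; simpl. f_equal.
  - rewrite !sum_mul_l, <- minus_sum. apply sum_eq; intros; ring.
  - rewrite !sum_mul_l, <- sum_plus. apply sum_eq; intros; ring.
Qed.

Lemma Csum_S f n : Csum f (S n) = Cadd (Csum f n) (f (S n)).
Proof. reflexivity. Qed.

Lemma Csum_zero f n : (forall i, (i <= n)%nat -> f i = (0, 0)) -> Csum f n = (0, 0).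
Proof.
  intros H. unfold Csum. f_equal; apply sum_eq_R0; intros; rewrite H; auto.
Qed.

Lemma Csum_shift (F : nat -> Cplx) m d :
  Csum (fun j => if Nat.leb m j then F (j - m)%nat else (0, 0)) (m + d) = Csum F d.
Proof.
  induction d.
  - rewrite Nat.add_0_r. destruct m.
    + simpl. reflexivity.
    + rewrite Csum_S, Csum_zero.
      * rewrite Nat.leb_refl, Nat.sub_diag. unfold Cadd, Csum; simpl. f_equal; ring.
      * intros i Hi. destruct (Nat.leb (S m) i) eqn:E; auto. apply Nat.leb_le in E. lia.
  - replace (m + S d)%nat with (S (m + d)) by lia. rewrite !Csum_S, IHd.
    replace (Nat.leb m (S (m + d))) with true by (symmetry; apply Nat.leb_le; lia).
    replace (S (m + d) - m)%nat with (S d) by lia. reflexivity.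
Qed.

Lemma Cpow_add z i m : Cpow z (i + m) = Cmul (Cpow z i) (Cpow z m).
Proof.
  induction i; simpl.
  - destruct (Cpow z m); unfold Cmul; simpl; f_equal; ring.
  - rewrite IHi. destruct z, (Cpow (r, r0) i), (Cpow (r, r0) m); unfold Cmul; simpl; f_equal; ring.
Qed.

Lemma Cmod_upt rho phi : 0 <= rho -> Cmod (upt rho phi) = rho.
Proof.
  intros H. unfold Cmod, upt; simpl fst; simpl snd.
  replace ((rho * cos phi) ^ 2 + (rho * sin phi) ^ 2) with (rho ^ 2 * (sin phi ^ 2 + cos phi ^ 2)) by ring.
  rewrite <- !Rsqr_pow2, sin2_cos2, Rmult_1_r, Rsqr_pow2. apply sqrt_pow2; auto.
Qed.

Lemma limit_to_1 X Y m : 0 <= X -> (forall rho, 0 < rho < 1 -> X * rho ^ m <= Y) -> X <= Y.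
Proof.
  intros HX H. apply Rle_plus_epsilon. intros eps Heps.
  set (d := Rmin (1/2) (eps / (INR m * X + 1))).
  assert (Hd : 0 < d <= 1/2).
  { unfold d. split. apply Rmin_glb_lt. lra. apply Rdiv_lt_0_compat; auto.
    pose proof (pos_INR m). nra. apply Rmin_l. }
  specialize (H (1 - d) ltac:(lra)).
  pose proof (bern (1 - d) m ltac:(lra)).
  assert (Hd2 : d * (INR m * X + 1) <= eps).
  { unfold d. pose proof (Rmin_r (1/2) (eps / (INR m * X + 1))).
    pose proof (pos_INR m). assert (0 < INR m * X + 1) by nra.
    apply (Rmult_le_compat_r (INR m * X + 1)) in H1; [|lra].
    unfold Rdiv in H1. rewrite Rmult_assoc, Rinv_l in H1 by lra. fold d in H1. lra. }
  pose proof (pos_INR m). nra.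
Qed.

Lemma pow_le_one x n : 0 <= x <= 1 -> x ^ n <= 1.
Proof. intros. rewrite <- (pow1 n). apply pow_incr. lra. Qed.

Lemma pow_decr x j m : 0 <= x <= 1 -> (j <= m)%nat -> x ^ m <= x ^ j.
Proof.
  intros Hx Hjm. replace m with (j + (m - j))%nat by lia. rewrite pow_add.
  pose proof (pow_le x j (proj1 Hx)). pose proof (pow_le_one x (m - j) Hx). nra.
Qed.

Lemma alg_id a b s n w : Cadd a (Cmul n (Cmul w b)) =
  Cadd (Cmul s (Cadd (1,0) (Cmul n w))) (Cadd (Csub a s) (Cmul n (Cmul w (Csub b s)))).
Proof. destruct a, b, s, n, w; unfold Cadd, Cmul, Csub; simpl; f_equal; ring. Qed.

Lemma schur_step (g : nat -> Cplx) (gam : R) (Hgam : 0 <= gam < 1) (Hg0 : g 0%nat = (gam, 0))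
  (HS : forall z, Cmod z < 1 -> exists s,
     Cseries (fun k => Cmul (g k) (Cpow z k)) s /\ Cmod s <= 1) m : (1 <= m)%nat ->
  sum_f_R0 (fun j => Cnorm2 (g j)) (pred m) + Cnorm2 (g m) / (1 - gam ^ 2) <= 1.
Proof.
  intros Hm.
  set (t := gam / (1 - gam ^ 2)).
  set (nu := Cscale t (g m)).
  set (p := fun j => if Nat.eqb j 0 then (1, 0) else if Nat.eqb j m then nu else (0, 0)).
  set (G := fun j => Cadd (g j) (if Nat.leb m j then Cmul nu (g (j - m)%nat) else (0, 0))).
  assert (Hconv : forall z, Cmod z < 1 -> exists s, Cseries (fun k => Cmul (g k) (Cpow z k)) s).
  { intros z Hz. destruct (HS z Hz) as [s [? ?]]. eauto. }
  assert (Hp_low : forall z k, (k < m)%nat -> peval p k z = (1, 0)).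
  { intros z k Hk. induction k.
    - unfold peval, Csum, p; simpl. f_equal; ring.
    - unfold peval. rewrite Csum_S. fold (peval p k z). rewrite IHk by lia.
      unfold p. replace (Nat.eqb (S k) 0) with false by reflexivity.
      replace (Nat.eqb (S k) m) with false by (symmetry; apply Nat.eqb_neq; lia).
      destruct (Cpow z (S k)). unfold Cadd, Cmul; simpl. f_equal; ring. }
  assert (Hp : forall z, peval p m z = Cadd (1, 0) (Cmul nu (Cpow z m))).
  { intros z. destruct m as [|m']; [lia|]. unfold peval. rewrite Csum_S. fold (peval p m' z).
    rewrite Hp_low by lia. cbv beta.
    replace (p (S m')) with nu by (unfold p; simpl Nat.eqb; rewrite Nat.eqb_refl; reflexivity). reflexivity. }
  assert (HG : forall z N, (m <= N)%nat -> peval G N z =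
     Cadd (peval g N z) (Cmul nu (Cmul (Cpow z m) (peval g (N - m) z)))).
  { intros z N HN. unfold peval, G.
    rewrite (Csum_ext _ (fun j => Cadd (Cmul (g j) (Cpow z j))
        (if Nat.leb m j then Cmul (Cmul nu (Cpow z m)) (Cmul (g (j - m)%nat) (Cpow z (j - m)%nat)) else (0,0)))).
    - rewrite Csum_add. f_equal. replace N with (m + (N - m))%nat at 1 by lia.
      rewrite (Csum_shift (fun k => Cmul (Cmul nu (Cpow z m)) (Cmul (g k) (Cpow z k))) m (N - m)).
      rewrite Csum_mul_l.
      destruct nu, (Csum _ _), (Cpow z m); unfold Cmul; simpl; f_equal; ring.
    - intros i Hi. destruct (Nat.leb m i) eqn:E.
      + apply Nat.leb_le in E. replace (Cpow z i) with (Cmul (Cpow z (i - m)) (Cpow z m))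
          by (rewrite <- Cpow_add; f_equal; lia).
        destruct (g i), nu, (g (i - m)%nat), (Cpow z (i - m)%nat), (Cpow z m).
        unfold Cadd, Cmul; simpl; f_equal; ring.
      + destruct (g i), (Cpow z i). unfold Cadd, Cmul; simpl; f_equal; ring. }
  assert (Key : forall rho, 0 < rho < 1 ->
     sum_f_R0 (fun j => Cnorm2 (G j) * rho ^ (2 * j)) m <=
     sum_f_R0 (fun j => Cnorm2 (p j) * rho ^ (2 * j)) m).
  { intros rho Hr. apply gutz; [lra|].
    intros eps Heps.
    set (K := 1 + Cmod nu).
    assert (HK : 1 <= K) by (pose proof (Cmod_ge0 nu); unfold K; lra).
    set (dl := Rmin 1 (eps / (3 * K ^ 2))).
    assert (Hdl : 0 < dl <= 1).
    { unfold dl. split. apply Rmin_glb_lt. lra. apply Rdiv_lt_0_compat; nra. apply Rmin_l. }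
    assert (Hdl2 : dl * (3 * K ^ 2) <= eps).
    { pose proof (Rmin_r 1 (eps / (3 * K ^ 2))). fold dl in H.
      apply (Rmult_le_compat_r (3 * K ^ 2)) in H; [|nra].
      unfold Rdiv in H. rewrite Rmult_assoc, Rinv_l in H by nra. lra. }
    destruct (tail_unif g Hconv rho (conj (Rlt_le _ _ (proj1 Hr)) (proj2 Hr)) dl (proj1 Hdl)) as [N0 HN0].
    exists (N0 + m)%nat. intros N HN phi.
    set (z := upt rho phi).
    assert (Hz : Cmod z = rho) by (apply Cmod_upt; lra).
    destruct (HS z ltac:(lra)) as [s [Hs Hs1]].
    pose proof (HN0 N ltac:(lia) z s ltac:(lra) Hs) as T1.
    pose proof (HN0 (N - m)%nat ltac:(lia) z s ltac:(lra) Hs) as T2.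
    rewrite HG by lia. rewrite Hp.
    rewrite (alg_id _ _ s).
    set (P := Cadd (1, 0) (Cmul nu (Cpow z m))).
    assert (Hzm : Cmod (Cpow z m) <= 1).
    { rewrite Cmod_pow, Hz. apply pow_le_one. lra. }
    assert (HP : Cmod P <= K).
    { unfold P, K. pose proof (Cmod_triang (1,0) (Cmul nu (Cpow z m))).
      rewrite Cmod_real, Rabs_R1, Cmod_mul in H. pose proof (Cmod_ge0 nu). nra. }
    set (Q := Cadd (Cmul s P) (Cadd (Csub (peval g N z) s) (Cmul nu (Cmul (Cpow z m) (Csub (peval g (N - m) z) s))))).
    assert (HQ : Cmod Q <= Cmod P + dl * K).
    { unfold Q. 
      pose proof (Cmod_triang (Cmul s P) (Cadd (Csub (peval g N z) s) (Cmul nu (Cmul (Cpow z m) (Csub (peval g (N - m) z) s))))).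
      pose proof (Cmod_triang (Csub (peval g N z) s) (Cmul nu (Cmul (Cpow z m) (Csub (peval g (N - m) z) s)))).
      rewrite !Cmod_mul in H, H0.
      pose proof (Cmod_ge0 nu). pose proof (Cmod_ge0 P). pose proof (Cmod_ge0 s).
      pose proof (Cmod_ge0 (Cpow z m)). pose proof (Cmod_ge0 (Csub (peval g (N - m) z) s)).
      assert (Cmod s * Cmod P <= Cmod P) by nra.
      assert (Cmod (Cpow z m) * Cmod (Csub (peval g (N - m) z) s) <= dl) by nra.
      assert (Cmod nu * (Cmod (Cpow z m) * Cmod (Csub (peval g (N - m) z) s)) <= Cmod nu * dl) by nra.
      rewrite Cmod_mul in H0. unfold K. lra. }
    rewrite <- !Cmod_sq.
    pose proof (Cmod_ge0 Q). pose proof (Cmod_ge0 P).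
    assert (Cmod Q ^ 2 <= (Cmod P + dl * K) ^ 2) by (apply pow_incr; lra).
    assert ((Cmod P + dl * K) ^ 2 <= Cmod P ^ 2 + dl * (3 * K ^ 2)).
    { assert (dl * K * (2 * Cmod P + dl * K) <= dl * (3 * K ^ 2)).
      { assert (2 * Cmod P + dl * K <= 3 * K) by nra.
        assert (0 <= dl * K) by nra. nra. }
      nra. }
    lra. }
  assert (Hp_sum : forall rho k, (k < m)%nat -> sum_f_R0 (fun j => Cnorm2 (p j) * rho ^ (2 * j)) k = 1).
  { intros rho k Hk. induction k.
    - simpl. unfold p; simpl. unfold Cnorm2; simpl. ring.
    - change (sum_f_R0 ?F (S ?n)) with (sum_f_R0 F n + F (S n)). cbv beta. rewrite IHk by lia.
      replace (p (S k)) with ((0, 0) : Cplx).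
      unfold Cnorm2; simpl; ring.
      unfold p. replace (Nat.eqb (S k) 0) with false by reflexivity.
      replace (Nat.eqb (S k) m) with false by (symmetry; apply Nat.eqb_neq; lia). reflexivity. }
  assert (RHS : forall rho, 0 < rho < 1 ->
     sum_f_R0 (fun j => Cnorm2 (p j) * rho ^ (2 * j)) m <= 1 + Cnorm2 nu).
  { intros rho Hr. destruct m as [|m']; [lia|].
    change (sum_f_R0 ?F (S ?n)) with (sum_f_R0 F n + F (S n)). cbv beta. rewrite Hp_sum by lia.
    replace (p (S m')) with nu by (unfold p; simpl Nat.eqb; rewrite Nat.eqb_refl; reflexivity).
    pose proof (Cnorm2_ge0 nu). pose proof (pow_le_one rho (2 * S m') ltac:(lra)).
    pose proof (pow_le rho (2 * S m') ltac:(lra)). nra. }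
  assert (LHS : forall rho, 0 < rho < 1 ->
     sum_f_R0 (fun j => Cnorm2 (G j)) m * rho ^ (2 * m) <=
     sum_f_R0 (fun j => Cnorm2 (G j) * rho ^ (2 * j)) m).
  { intros rho Hr. rewrite Rmult_comm, scal_sum. apply sum_Rle. intros j Hj.
    apply Rmult_le_compat_l. apply Cnorm2_ge0. apply pow_decr. lra. lia. }
  assert (HX : sum_f_R0 (fun j => Cnorm2 (G j)) m <= 1 + Cnorm2 nu).
  { apply (limit_to_1 _ _ (2 * m)). apply cond_pos_sum. intros; apply Cnorm2_ge0.
    intros rho Hr. specialize (Key rho Hr). specialize (RHS rho Hr). specialize (LHS rho Hr). lra. }
  assert (HXe : sum_f_R0 (fun j => Cnorm2 (G j)) m =
     sum_f_R0 (fun j => Cnorm2 (g j)) (pred m) + (1 + t * gam) ^ 2 * Cnorm2 (g m)).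
  { destruct m as [|m']; [lia|]. simpl pred.
    change (sum_f_R0 ?F (S ?n)) with (sum_f_R0 F n + F (S n)). cbv beta. f_equal.
    - apply sum_eq. intros j Hj. unfold G. replace (Nat.leb (S m') j) with false
        by (symmetry; apply Nat.leb_gt; lia).
      destruct (g j); unfold Cnorm2, Cadd; simpl; ring.
    - unfold G. rewrite Nat.leb_refl, Nat.sub_diag, Hg0. unfold nu, Cscale.
      destruct (g (S m')); unfold Cnorm2, Cadd, Cmul; simpl; ring. }
  assert (Hnu : Cnorm2 nu = t ^ 2 * Cnorm2 (g m)) by (unfold nu; apply Cnorm2_scale).
  rewrite HXe, Hnu in HX.
  assert (Hid : (1 + t * gam) ^ 2 - t ^ 2 = / (1 - gam ^ 2)).
  { unfold t. field. nra. }
  assert (Cnorm2 (g m) / (1 - gam ^ 2) = ((1 + t * gam) ^ 2 - t ^ 2) * Cnorm2 (g m)).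
  { rewrite Hid. unfold Rdiv. ring. }
  lra.
Qed.



Lemma partial_bound g gam :
  0 <= gam < 1 -> g 0%nat = (gam, 0) ->
  (forall z, Cmod z < 1 -> exists s, Cseries (fun k => Cmul (g k) (Cpow z k)) s /\ Cmod s <= 1) ->
  forall p, sum_f_R0 (fun i => Cnorm2 (g (S i))) p <= (1 - gam ^ 2) * (1 - (gam ^ 2) ^ (S p)).
Proof.
  intros Hgam Hg0 HS p.
  assert (Hpos : 0 < 1 - gam ^ 2) by nra.
  induction p.
  - pose proof (schur_step g gam Hgam Hg0 HS 1 ltac:(lia)) as H. simpl in H. simpl.
    rewrite Hg0 in H. unfold Cnorm2 at 1 in H. simpl fst in H; simpl snd in H.
    assert (Cnorm2 (g 1%nat) / (1 - gam ^ 2) <= 1 - gam ^ 2) by (simpl; nra).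
    apply (Rmult_le_compat_r (1 - gam ^ 2)) in H0; [|lra].
    unfold Rdiv in H0. rewrite Rmult_assoc, Rinv_l in H0 by lra. simpl in *. nra.
  - pose proof (schur_step g gam Hgam Hg0 HS (S (S p)) ltac:(lia)) as H. simpl pred in H.
    rewrite decomp_sum in H by lia. simpl pred in H. rewrite Hg0 in H.
    unfold Cnorm2 at 1 in H. simpl fst in H; simpl snd in H.
    change (sum_f_R0 ?F (S ?n)) with (sum_f_R0 F n + F (S n)). cbv beta.
    set (A := sum_f_R0 (fun i => Cnorm2 (g (S i))) p) in *.
    set (c := Cnorm2 (g (S (S p)))) in *.
    assert (c / (1 - gam ^ 2) <= 1 - gam ^ 2 - A) by (replace (0 ^ 2) with 0 in H by ring; lra).
    apply (Rmult_le_compat_r (1 - gam ^ 2)) in H0; [|lra].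
    unfold Rdiv in H0. rewrite Rmult_assoc, Rinv_l in H0 by lra.
    assert (HA : 0 <= gam ^ 2) by nra.
    apply (Rmult_le_compat_l (gam ^ 2)) in IHp; auto.
    replace ((gam ^ 2) ^ S (S p)) with (gam ^ 2 * (gam ^ 2) ^ S p) by reflexivity.
    nra.
Qed.

Lemma abel (x h w : nat -> R) :
  (forall i, w (S i) <= w i) -> (forall i, 0 <= w i) ->
  (forall p, sum_f_R0 x p <= sum_f_R0 h p) ->
  forall n, sum_f_R0 (fun i => x i * w i) n <= sum_f_R0 (fun i => h i * w i) n.
Proof.
  intros Hdec Hpos Hpart n.
  assert (Key : forall n, sum_f_R0 (fun i => x i * w i) n - sum_f_R0 (fun i => h i * w i) n
                 <= (sum_f_R0 x n - sum_f_R0 h n) * w n).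
  { induction n0.
    - simpl. lra.
    - change (sum_f_R0 ?F (S ?n)) with (sum_f_R0 F n + F (S n)). cbv beta.
      pose proof (Hpart n0). pose proof (Hdec n0). pose proof (Hpos (S n0)).
      assert ((sum_f_R0 x n0 - sum_f_R0 h n0) * (w n0 - w (S n0)) <= 0).
      { assert (0 <= w n0 - w (S n0)) by lra. nra. }
      nra. }
  specialize (Key n). pose proof (Hpart n). pose proof (Hpos n). nra.
Qed.


Lemma Un_cv_ext (u v : nat -> R) L : (forall n, u n = v n) -> Un_cv u L -> Un_cv v L.
Proof. intros H Hu eps Heps. destruct (Hu eps Heps) as [N HN]. exists N. intros n Hn. rewrite <- H. auto. Qed.

Lemma Cseries_scale f S c : Cseries f S -> Cseries (fun k => Cscale c (f k)) (Cscale c S).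
Proof.
  intros [H1 H2]. assert (Hc : Un_cv (fun _ : nat => c) c).
  { intros eps Heps. exists 0%nat. intros. unfold Rdist. rewrite Rminus_diag, Rabs_R0. auto. }
  split; simpl.
  - apply (Un_cv_ext (fun N => c * sum_f_R0 (fun k => fst (f k)) N)).
    intros; rewrite sum_mul_l; reflexivity. apply (CV_mult _ _ _ _ Hc H1).
  - apply (Un_cv_ext (fun N => c * sum_f_R0 (fun k => snd (f k)) N)).
    intros; rewrite sum_mul_l; reflexivity. apply (CV_mult _ _ _ _ Hc H2).
Qed.

Lemma Cpow_scale c w k : Cpow (Cscale c w) k = Cscale (c ^ k) (Cpow w k).
Proof.
  induction k; simpl.
  - unfold Cscale; simpl; f_equal; ring.
  - rewrite IHk. destruct w, (Cpow (r, r0) k). unfold Cscale, Cmul; simpl; f_equal; ring.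
Qed.

Theorem theorem4 (b : nat -> Cplx) (a r : R) (n : nat) :
  in_class_B b ->
  b 1%nat = (a, 0) ->
  0 < a < 1 ->
  0 < r <= 1 / sqrt 3 ->
  (2 <= n)%nat ->
  sum_f 2 n (fun k => INR k * Cmod (b k) ^ 2 * r ^ (2 * k))
  <= 3 * (9 - 4 * a ^ 2) ^ 2 / (64 * a ^ 4)
     * sum_f 2 n (fun k => / INR k * (4 / 3 * a ^ 2 * r ^ 2) ^ k).
Proof.
  intros HB Hb1 Ha Hr Hn.
  assert (H3 : 0 < sqrt 3) by (apply sqrt_lt_R0; lra).
  assert (H33 : sqrt 3 * sqrt 3 = 3) by (apply sqrt_sqrt; lra).
  set (s := / sqrt 3).
  assert (Hs : 0 < s) by (apply Rinv_0_lt_compat; auto).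
  assert (Hss : s * s = / 3) by (unfold s; rewrite <- Rinv_mult, H33; reflexivity).
  assert (Hs1 : s < 1) by nra.
  assert (Hr2 : r ^ 2 <= / 3).
  { assert (r <= s) by (unfold s; rewrite <- (Rmult_1_l (/ sqrt 3)); apply Hr).
    simpl. nra. }
  set (gam := 2 * a / 3).
  set (g := fun j => Cscale (2 / 3 * s ^ j * INR (S j)) (b (S j))).
  assert (Hgam : 0 <= gam < 1) by (unfold gam; lra).
  assert (Hg0 : g 0%nat = (gam, 0)).
  { unfold g. rewrite Hb1. unfold Cscale, gam; simpl. f_equal; field. }
  assert (HS : forall w, Cmod w < 1 -> exists s',
             Cseries (fun k => Cmul (g k) (Cpow w k)) s' /\ Cmod s' <= 1).
  { intros w Hw. set (z := Cscale s w).
    assert (Hz : Cmod z = s * Cmod w) by (unfold z; rewrite Cmod_scale, Rabs_pos_eq; lra).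
    pose proof (Cmod_ge0 w).
    destruct (HB z ltac:(nra)) as [_ [W [HW HWb]]].
    exists (Cscale (2/3) W). split.
    - apply (Cseries_scale _ _ (2/3)) in HW.
      destruct HW as [HW1 HW2]. split.
      + eapply Un_cv_ext; [|exact HW1]. intro N. apply sum_eq. intros k _.
        unfold z. rewrite Cpow_scale. unfold g.
        destruct (b (S k)), (Cpow w k). unfold Cscale, Cmul; simpl. ring.
      + eapply Un_cv_ext; [|exact HW2]. intro N. apply sum_eq. intros k _.
        unfold z. rewrite Cpow_scale. unfold g.
        destruct (b (S k)), (Cpow w k). unfold Cscale, Cmul; simpl. ring.
    - rewrite Cmod_scale, Rabs_pos_eq by lra.
      assert (Cmod z ^ 2 < / 3) by (rewrite Hz; simpl; nra).
      assert (1 / (1 - Cmod z ^ 2) <= 3 / 2).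
      { apply (Rmult_le_reg_r (1 - Cmod z ^ 2)). lra.
        unfold Rdiv. rewrite Rmult_assoc, Rinv_l by lra. nra. }
      lra. }
  pose proof (partial_bound g gam Hgam Hg0 HS) as PB.
  set (T := 3 * r ^ 2).
  assert (HT : 0 < T <= 1) by (unfold T; split; nra).
  set (w := fun i : nat => T ^ (S i) / INR (S (S i))).
  set (x := fun i : nat => Cnorm2 (g (S i))).
  set (h := fun i : nat => (1 - gam ^ 2) ^ 2 * (gam ^ 2) ^ i).
  assert (Hw_pos : forall i, 0 <= w i).
  { intro i. unfold w. apply Rdiv_le_0_compat. apply pow_le; lra. apply lt_0_INR; lia. }
  assert (Hw_dec : forall i, w (S i) <= w i).
  { intro i. unfold w. pose proof (pow_le T (S i) ltac:(lra)).
    assert (T ^ S (S i) <= T ^ S i) by (simpl; simpl in H; nra).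
    assert (0 < INR (S (S i))) by (apply lt_0_INR; lia).
    assert (INR (S (S i)) <= INR (S (S (S i)))) by (apply le_INR; lia).
    unfold Rdiv. apply Rmult_le_compat; auto. apply pow_le; lra.
    left. apply Rinv_0_lt_compat. lra.
    apply Rinv_le_contravar; lra. }
  assert (Hpart : forall p, sum_f_R0 x p <= sum_f_R0 h p).
  { intro p. replace (sum_f_R0 h p) with ((1 - gam ^ 2) * (1 - (gam ^ 2) ^ S p)). apply PB.
    induction p.
    - unfold h; simpl. ring.
    - change (sum_f_R0 ?F (S ?n)) with (sum_f_R0 F n + F (S n)). rewrite <- IHp.
      unfold h. simpl. ring. }
  pose proof (abel x h w Hw_dec Hw_pos Hpart (n - 2)) as AB.
  unfold sum_f.
  rewrite (sum_eq _ (fun i => 9 / 4 * r ^ 2 * (x i * w i))).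
  rewrite (sum_eq (fun i => / INR (i + 2) * (4 / 3 * a ^ 2 * r ^ 2) ^ (i + 2))
                  (fun i => (9 / 4 * r ^ 2 / (3 * (9 - 4 * a ^ 2) ^ 2 / (64 * a ^ 4))) * (h i * w i))).
  - rewrite <- !sum_mul_l.
    assert (0 < 3 * (9 - 4 * a ^ 2) ^ 2 / (64 * a ^ 4)).
    { assert (0 < 9 - 4 * a ^ 2) by nra. apply Rdiv_lt_0_compat. apply Rmult_lt_0_compat; [lra| apply pow_lt; lra]. apply Rmult_lt_0_compat; [lra| apply pow_lt; lra]. }
    replace (3 * (9 - 4 * a ^ 2) ^ 2 / (64 * a ^ 4) *
       (9 / 4 * r ^ 2 / (3 * (9 - 4 * a ^ 2) ^ 2 / (64 * a ^ 4)) * sum_f_R0 (fun i => h i * w i) (n - 2)))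
     with (9 / 4 * r ^ 2 * sum_f_R0 (fun i => h i * w i) (n - 2)) by (field; nra).
    apply Rmult_le_compat_l. nra. exact AB.
  - intros i _. replace (i + 2)%nat with (S (S i)) by lia.
    unfold h, w, T, gam.
    assert (0 < INR (S (S i))) by (apply lt_0_INR; lia).
    replace (4 / 3 * a ^ 2 * r ^ 2) with ((2 * a / 3) ^ 2 * (3 * r ^ 2)) by field.
    rewrite Rpow_mult_distr.
    replace (((2 * a / 3) ^ 2) ^ S (S i)) with ((2 * a / 3) ^ 2 * (2 * a / 3) ^ 2 * ((2 * a / 3) ^ 2) ^ i) by (simpl; ring).
    replace ((3 * r ^ 2) ^ S (S i)) with (3 * r ^ 2 * (3 * r ^ 2) ^ S i) by (simpl; ring).
    field. split; [lra|]. split; [nra|]. nra.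
  - intros i _. replace (i + 2)%nat with (S (S i)) by lia.
    unfold x, w, g, T. rewrite Cnorm2_scale, Cmod_sq.
    assert (0 < INR (S (S i))) by (apply lt_0_INR; lia).
    assert (E : (s ^ S i) ^ 2 * (3 * r ^ 2) ^ S i = (r ^ 2) ^ S i).
    { rewrite <- pow_mult, Nat.mul_comm, pow_mult, <- Rpow_mult_distr. f_equal.
      simpl. replace (s * (s * 1)) with (s * s) by ring. rewrite Hss. field. }
    rewrite (pow_mult r 2 (S (S i))).
    replace ((r ^ 2) ^ S (S i)) with (r ^ 2 * (r ^ 2) ^ S i) by reflexivity.
    rewrite <- E.

    field. lra.
Qed.
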